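(* Let $\lambda_1,\lambda_2$ be as in the context and, for each $c>0$, let $\widetilde{\theta_c}$ be the unique $\theta\in(0,\frac{\pi}{2})\cap(0,\theta_c^+)$ with $H(c,\theta)=0$. Then $\lim_{c\to+\infty}\widetilde{\theta_c}=\frac{\pi}{2}$.
   Context: Either $\lambda_1>\lambda_2>0$ or $\lambda_1=\lambda_2=1$. For $c>0$ put $\theta_c^+=\pi$ if $c>\sqrt2\lambda_1$ and $\theta_c^+=\arccos(1-c^2/\lambda_1^2)$ if $0<c\le\sqrt2\lambda_1$; $\Omega=\{(c,\theta): c>0,\ |\theta|<\theta_c^+\}$. For $(c,\theta)\in\Omega$: $D=\sin\theta/c$; $\varphi$ is the global solution of $\varphi'(u)=\sqrt{c^2+2\cos\theta\,B(u)-D^2B(u)^2}$, $\varphi(0)=0$, where $B(u)=\lambda_1^2\cos^2\varphi(u)+\lambda_2^2\sin^2\varphi(u)$; $U>0$ is the unique number with $\varphi(U)=\pi$; $f$ solves $f'(u)=DB(u)$, $f(0)=0$; $G(u)=\int_0^u\frac{c-\varphi'(s)}{B(s)}ds$; $H(c,\theta)=Df(U)+cG(U)$. For every $c>0$ there is exactly one $\theta\in(0,\pi/2)\cap(0,\theta_c^+)$ with $H(c,\theta)=0$. *)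

(* Defs.v *)
From Stdlib Require Import Reals.
From Coquelicot Require Import Coquelicot.
Open Scope R_scope.

Definition lambdas_ok (l1 l2 : R) : Prop :=
  (l1 > l2 /\ l2 > 0) \/ (l1 = 1 /\ l2 = 1).

Definition theta_plus (l1 c : R) : R :=
  if Rlt_dec (sqrt 2 * l1) c then PI else acos (1 - c ^ 2 / l1 ^ 2).

Definition Dcoef (c th : R) : R := sin th / c.

Definition Bfun (l1 l2 : R) (phi : R -> R) (u : R) : R :=
  l1 ^ 2 * (cos (phi u)) ^ 2 + l2 ^ 2 * (sin (phi u)) ^ 2.

Definition is_phi_sol (l1 l2 c th : R) (phi : R -> R) : Prop :=
  phi 0 = 0 /\
  forall u : R,
    is_derive phi u
      (sqrt (c ^ 2 + 2 * cos th * Bfun l1 l2 phi u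
             - (Dcoef c th) ^ 2 * (Bfun l1 l2 phi u) ^ 2)).

Definition is_f_sol (l1 l2 c th : R) (phi f : R -> R) : Prop :=
  f 0 = 0 /\ forall u : R, is_derive f u (Dcoef c th * Bfun l1 l2 phi u).

Definition Gfun (l1 l2 c : R) (phi : R -> R) (u : R) : R :=
  RInt (fun s => (c - Derive phi s) / Bfun l1 l2 phi s) 0 u.

Definition H_is (l1 l2 c th h : R) : Prop :=
  exists (phi f : R -> R) (U : R),
    is_phi_sol l1 l2 c th phi /\ 0 < U /\ phi U = PI /\
    is_f_sol l1 l2 c th phi f /\
    h = Dcoef c th * f U + c * Gfun l1 l2 c phi U.

(* Main.v *)
Require Import Defs.
From Stdlib Require Import Reals Lra Psatz.
From Coquelicot Require Import Coquelicot.
Open Scope R_scope.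

Definition Bx (l1 l2 x : R) := l1 ^ 2 * (cos x) ^ 2 + l2 ^ 2 * (sin x) ^ 2.

Lemma Bx_bounds l1 l2 x : 0 < l2 <= l1 -> l2^2 <= Bx l1 l2 x <= l1^2.
Proof.
  intros [h1 h2]. unfold Bx. pose proof (sin2_cos2 x). unfold Rsqr in H.
  assert (l2^2 <= l1^2) by nra.
  assert (0 <= cos x ^2) by nra. assert (0 <= sin x ^2) by nra.
  split; nra.
Qed.

Definition Qx c th l1 l2 x := c^2 + 2 * cos th * Bx l1 l2 x - (Dcoef c th)^2 * (Bx l1 l2 x)^2.
Definition Ex c th l1 l2 x := (c - sqrt (Qx c th l1 l2 x)) / Bx l1 l2 x.

Lemma ex_E c th l1 l2 x : 0 < Qx c th l1 l2 x -> 0 < Bx l1 l2 x ->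
  ex_derive (Ex c th l1 l2) x.
Proof.
  intros HQ HB. unfold Ex, Qx, Bx in *. auto_derive. split. exact HQ. split; [lra|exact I].
Qed.

Section K.
Variables (l1 l2 c th eps : R).
Hypothesis hl : 0 < l2 <= l1.
Hypothesis he : 0 < eps <= 1.
Hypothesis hc : 0 < c.
Hypothesis hc1 : l1^2 <= eps * c^2.
Hypothesis hcos : eps <= cos th.

Lemma D2_bound : 0 <= (Dcoef c th)^2 /\ (Dcoef c th)^2 * c^2 <= 1.
Proof.
  unfold Dcoef. pose proof (sin2_cos2 th). unfold Rsqr in H.
  split. nra.
  replace ((sin th / c)^2 * c^2) with (sin th ^2) by (field; lra). nra.
Qed.

Lemma Q_bounds x : c^2 + eps * l2^2 <= Qx c th l1 l2 x <= 4 * c^2.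
Proof.
  destruct D2_bound as [d0 d1]. destruct (Bx_bounds l1 l2 x hl) as [b0 b1].
  unfold Qx. set (B := Bx l1 l2 x) in *. set (d := (Dcoef c th)^2) in *.
  assert (hcs : cos th <= 1) by apply COS_bound.
  assert (dB : d * B <= eps).
  { assert (d * B * c^2 <= eps * c^2) by nra. nra. }
  assert (0 <= d * B). nra.
  assert (0 < l2^2) by nra.
  split; nra.
Qed.

Lemma E_bound x : Ex c th l1 l2 x <= - (eps * l2^2 / (3 * c)) / l1^2.
Proof.
  destruct (Q_bounds x) as [q0 q1]. destruct (Bx_bounds l1 l2 x hl) as [b0 b1].
  unfold Ex. set (Q := Qx c th l1 l2 x) in *. set (B := Bx l1 l2 x) in *.
  assert (0 < l2^2) by nra.
  assert (hQ0 : 0 <= Q) by nra.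
  pose proof (sqrt_sqrt Q hQ0) as hs. set (s := sqrt Q) in *.
  pose proof (sqrt_pos Q) as s0. fold s in s0.
  assert (cs : c <= s) by nra.
  assert (s2 : s <= 2 * c) by nra.
  assert (k : c - s <= - (eps * l2^2 / (3 * c))).
  { assert ((c - s) * (3 * c) <= - (eps * l2^2)) by nra.
    apply (Rmult_le_reg_r (3 * c)). lra.
    replace (- (eps * l2 ^ 2 / (3 * c)) * (3 * c)) with (- (eps * l2^2)) by (field; lra). lra. }
  assert (0 < eps * l2^2 / (3*c)). { apply Rdiv_lt_0_compat; nra. }
  set (K := eps * l2^2 / (3*c)) in *.
  unfold Rdiv. 
  apply Rle_trans with (-K * / B).
  apply Rmult_le_compat_r. left; apply Rinv_0_lt_compat; lra. lra.
  rewrite !Ropp_mult_distr_l_reverse. apply Ropp_le_contravar.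
  apply Rmult_le_compat_l. lra. apply Rinv_le_contravar; lra.
Qed.

Hypothesis hc2 : 3 * l1^4 < eps * l2^2 * c^2.

Lemma noH : ~ H_is l1 l2 c th 0.
Proof.
  intros (phi & f & U & [phi0 dphi] & HU & phiU & [f0 df] & Heq).
  assert (Bpos : forall x, 0 < Bx l1 l2 x).
  { intro x. destruct (Bx_bounds l1 l2 x hl). nra. }
  assert (Qpos : forall x, 0 < Qx c th l1 l2 x).
  { intro x. destruct (Q_bounds x). nra. }
  assert (dE : forall x, Derive phi x = sqrt (Qx c th l1 l2 (phi x))).
  { intro x. apply is_derive_unique. apply dphi. }
  assert (G1 : Gfun l1 l2 c phi U = RInt (fun s => Ex c th l1 l2 (phi s)) 0 U).
  { unfold Gfun. apply RInt_ext. intros x _. rewrite dE. reflexivity. }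
  assert (exE : ex_RInt (fun s => Ex c th l1 l2 (phi s)) 0 U).
  { apply (ex_RInt_continuous (V:=R_CompleteNormedModule)). intros z _.
    assert (hd : ex_derive (fun s => Ex c th l1 l2 (phi s)) z).
    { apply ex_derive_comp. apply ex_E; auto. eexists; apply dphi. }
    exact (ex_derive_continuous _ _ hd). }
  set (K := - (eps * l2^2 / (3 * c)) / l1^2).
  assert (G2 : RInt (fun s => Ex c th l1 l2 (phi s)) 0 U <= K * U).
  { apply Rle_trans with (RInt (fun _ => K) 0 U).
    apply RInt_le. lra. exact exE. apply ex_RInt_const.
    intros; apply E_bound.
    rewrite RInt_const. unfold scal; simpl; unfold mult; simpl. lra. }
  destruct (MVT_gen f 0 U (fun u => Dcoef c th * Bfun l1 l2 phi u)) as [xi [hxi fxi]].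
  { intros; apply df. }
  { intros x _. apply continuity_pt_filterlim.
    assert (hd : ex_derive f x) by (eexists; apply df).
    exact (ex_derive_continuous _ _ hd). }
  rewrite f0 in fxi.
  destruct D2_bound as [d0 d1].
  destruct (Bx_bounds l1 l2 (phi xi) hl) as [b0 b1].
  change (Bfun l1 l2 phi xi) with (Bx l1 l2 (phi xi)) in fxi.
  assert (Hf : Dcoef c th * f U <= l1^2 / c^2 * U).
  { replace (f U) with (Dcoef c th * Bx l1 l2 (phi xi) * U) by lra.
    replace (Dcoef c th * (Dcoef c th * Bx l1 l2 (phi xi) * U)) with ((Dcoef c th)^2 * Bx l1 l2 (phi xi) * U) by ring.
    apply Rmult_le_compat_r. lra.
    apply Rmult_le_reg_r with (c^2). nra.
    replace (l1 ^ 2 / c ^ 2 * c ^ 2) with (l1^2) by (field; lra). nra. }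
  assert (HK : c * K = - (eps * l2^2 / 3) / l1^2).
  { unfold K. field. split; nra. }
  assert (Hfin : l1^2 / c^2 < (eps * l2^2 / 3) / l1^2).
  { apply Rmult_lt_reg_r with (c^2 * l1^2). nra.
    replace (l1 ^ 2 / c ^ 2 * (c ^ 2 * l1 ^ 2)) with (l1^4) by (field; nra).
    replace (eps * l2 ^ 2 / 3 / l1 ^ 2 * (c ^ 2 * l1 ^ 2)) with (eps * l2^2 * c^2 / 3) by (field; nra).
    lra. }
  rewrite G1 in Heq.
  assert (c * RInt (fun s => Ex c th l1 l2 (phi s)) 0 U <= c * K * U).
  { rewrite Rmult_assoc. apply Rmult_le_compat_l; lra. }
  rewrite HK in H. nra.
Qed.

End K.

Theorem lemma5p3 (l1 l2 : R) (theta_t : R -> R) :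
  lambdas_ok l1 l2 ->
  (forall c : R, 0 < c ->
     0 < theta_t c /\ theta_t c < PI / 2 /\ theta_t c < theta_plus l1 c /\
     H_is l1 l2 c (theta_t c) 0) ->
  is_lim theta_t p_infty (PI / 2).
Proof.
  intros hl Hth.
  assert (hl' : 0 < l2 <= l1) by (destruct hl; lra).
  apply is_lim_spec. intro eps. simpl.
  pose proof PI_RGT_0 as hpi.
  destruct (Rle_lt_dec (PI/2) eps) as [big|small].
  { exists 0. intros c hc. destruct (Hth c hc) as (a & b & _).
    rewrite Rabs_left by lra. lra. }
  pose proof (cond_pos eps) as ep.
  set (e := sin eps).
  assert (e0 : 0 < e) by (apply sin_gt_0; lra).
  assert (e1 : e <= 1) by (apply SIN_bound).
  assert (l20 : 0 < l2^2) by nra.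
  exists (l1^2/e + 3*l1^4/(e*l2^2) + 1).
  intros c hc.
  assert (p1 : 0 <= l1^2/e) by (apply Rdiv_le_0_compat; nra).
  assert (p2 : 0 <= 3*l1^4/(e*l2^2)) by (apply Rdiv_le_0_compat; nra).
  assert (c1 : 1 < c) by lra.
  assert (cc : c < c^2) by nra.
  destruct (Hth c ltac:(lra)) as (a & b & _ & hH).
  rewrite Rabs_left by lra.
  destruct (Rlt_le_dec (PI/2 - eps) (theta_t c)) as [ok|bad]. lra.
  exfalso.
  assert (hcos : e <= cos (theta_t c)).
  { unfold e. rewrite <- cos_shift.
    destruct (Rle_lt_or_eq_dec _ _ bad) as [lt|eq].
    left. apply cos_decreasing_1; lra. right; rewrite eq; reflexivity. }
  apply (noH l1 l2 c (theta_t c) e); auto; try lra.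
  - assert (l1^2/e < c^2) by lra.
    apply Rmult_lt_compat_r with (r := e) in H; auto.
    replace (l1^2/e*e) with (l1^2) in H by (field; lra). lra.
  - assert (3*l1^4/(e*l2^2) < c^2) by lra.
    apply Rmult_lt_compat_r with (r := e*l2^2) in H; [|nra].
    replace (3*l1^4/(e*l2^2)*(e*l2^2)) with (3*l1^4) in H by (field; lra). lra.
Qed.
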